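(* Let $F=\{\mathbf{p}_0,\ldots,\mathbf{p}_n\}\subset\mathbb{R}^d$ be not contained in any $(d-1)$-dimensional affine subspace, $\lambda\in(0,1)$, $S_i(\mathbf{x})=\lambda\mathbf{x}+(1-\lambda)\mathbf{p}_i$ with attractor $X$. If $\mathbf{a}\in\mathcal{D}^{\mathbb{N}}$ is a universal coding of $\mathbf{x}\in X$, then the set $\{T_{a_1\cdots a_j}(\mathbf{x}):j\ge1\}$ is dense in $X$.
   Context: $\mathcal{D}=\{0,\ldots,n\}$. $X$ is the unique non-empty compact set with $X=\bigcup_{i\in\mathcal{D}}S_i(X)$. The coding map is $\pi(\mathbf{a})=\lim_{j\to\infty}(S_{a_1}\circ\cdots\circ S_{a_j})(\mathbf{0})$; $\mathbf{a}$ is a coding of $\mathbf{x}$ if $\pi(\mathbf{a})=\mathbf{x}$. A sequence is universal if it contains every finite word over $\mathcal{D}$ as a block of consecutive digits. $T_i(\mathbf{x})=\frac{\mathbf{x}-(1-\lambda)\mathbf{p}_i}{\lambda}$ is the inverse of $S_i$, and $T_{a_1\cdots a_j}=T_{a_j}\circ\cdots\circ T_{a_1}$. *)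

(* Defs.v *)
From HB Require Import structures.
From mathcomp Require Import all_boot all_order all_algebra.
From mathcomp Require Import all_classical all_reals all_analysis.
Set Implicit Arguments. Unset Strict Implicit. Unset Printing Implicit Defensive.
Import Order.TTheory GRing.Theory Num.Theory.
Import numFieldNormedType.Exports.
Local Open Scope classical_set_scope.
Local Open Scope ring_scope.

(* Points of R^d are row vectors 'rV[R]_d; digits D = {0..n} are 'I_n.+1;
   a sequence a in D^N is a : nat -> 'I_n.+1 with a 0 = a_1, a 1 = a_2, ... *)

Definition Smap (R : realType) (d n : nat) (p : 'I_n.+1 -> 'rV[R]_d)
  (lam : R) (i : 'I_n.+1) (x : 'rV[R]_d) : 'rV[R]_d :=
  lam *: x + (1 - lam) *: p i.

Definition Tmap (R : realType) (d n : nat) (p : 'I_n.+1 -> 'rV[R]_d)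
  (lam : R) (i : 'I_n.+1) (x : 'rV[R]_d) : 'rV[R]_d :=
  lam^-1 *: (x - (1 - lam) *: p i).

Definition Sword (R : realType) (d n : nat) (p : 'I_n.+1 -> 'rV[R]_d)
  (lam : R) (a : nat -> 'I_n.+1) (j : nat) (y : 'rV[R]_d) : 'rV[R]_d :=
  foldr (fun k z => Smap p lam (a k) z) y (iota 0 j).

Definition Tword (R : realType) (d n : nat) (p : 'I_n.+1 -> 'rV[R]_d)
  (lam : R) (a : nat -> 'I_n.+1) (j : nat) (x : 'rV[R]_d) : 'rV[R]_d :=
  foldl (fun z k => Tmap p lam (a k) z) x (iota 0 j).

Definition is_coding (R : realType) (d n : nat) (p : 'I_n.+1 -> 'rV[R]_d)
  (lam : R) (a : nat -> 'I_n.+1) (x : 'rV[R]_d) : Prop :=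
  (fun j => Sword p lam a j 0) @ \oo --> x.

Definition universal (n : nat) (a : nat -> 'I_n.+1) : Prop :=
  forall w : seq 'I_n.+1, exists k : nat,
    forall i : nat, (i < size w)%N -> a (k + i)%N = nth ord0 w i.

Definition is_attractor (R : realType) (d n : nat) (p : 'I_n.+1 -> 'rV[R]_d)
  (lam : R) (X : set 'rV[R]_d) : Prop :=
  X !=set0 /\ compact X /\ X = \bigcup_(i in [set: 'I_n.+1]) (Smap p lam i @` X).

Definition not_in_hyperplane (R : realType) (d n : nat) (p : 'I_n.+1 -> 'rV[R]_d)
  : Prop :=
  forall (v : 'rV[R]_d) (W : 'M[R]_d), \rank W = d.-1 ->
    ~ (forall i : 'I_n.+1, (p i - v <= W)%MS).

(* Main.v *)
Require Import Defs.
From HB Require Import structures.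
From mathcomp Require Import all_boot all_order all_algebra.
From mathcomp Require Import all_classical all_reals all_analysis.
From mathcomp Require Import lra.
Import Order.TTheory GRing.Theory Num.Theory.
Import numFieldNormedType.Exports.
Local Open Scope classical_set_scope.
Local Open Scope ring_scope.
Set Implicit Arguments. Unset Strict Implicit.

Definition SW (R : realType) (d n : nat) (p : 'I_n.+1 -> 'rV[R]_d) (lam : R)
  (s : seq 'I_n.+1) (y : 'rV[R]_d) := foldr (fun i z => Smap p lam i z) y s.
Definition TW (R : realType) (d n : nat) (p : 'I_n.+1 -> 'rV[R]_d) (lam : R)
  (s : seq 'I_n.+1) (y : 'rV[R]_d) := foldl (fun z i => Tmap p lam i z) y s.

Lemma TS (R : realType) (d n : nat) (p : 'I_n.+1 -> 'rV[R]_d) (lam : R) i y :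
  lam != 0 -> Tmap p lam i (Smap p lam i y) = y.
Proof. by move=> l0; rewrite /Tmap /Smap addrK scalerA mulVf // scale1r. Qed.

Lemma ST (R : realType) (d n : nat) (p : 'I_n.+1 -> 'rV[R]_d) (lam : R) i y :
  lam != 0 -> Smap p lam i (Tmap p lam i y) = y.
Proof. by move=> l0; rewrite /Tmap /Smap scalerA divff // scale1r subrK. Qed.

Lemma SW_TW (R : realType) (d n : nat) (p : 'I_n.+1 -> 'rV[R]_d) (lam : R) s y :
  lam != 0 -> SW p lam s (TW p lam s y) = y.
Proof.
move=> l0; elim: s y => [|i s IH] y //=.
by rewrite /SW /TW /= -/(SW p lam s _) -/(TW p lam s _) IH ST.
Qed.

Lemma SW_diff (R : realType) (d n : nat) (p : 'I_n.+1 -> 'rV[R]_d) (lam : R) s u v :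
  SW p lam s u - SW p lam s v = lam ^+ size s *: (u - v).
Proof.
elim: s => [|i s IH] /=; first by rewrite scale1r.
rewrite /SW /= -!/(SW p lam s _) /Smap opprD addrACA subrr addr0 -scalerBr IH.
by rewrite scalerA exprS.
Qed.

Lemma Sword_SW (R : realType) (d n : nat) (p : 'I_n.+1 -> 'rV[R]_d) (lam : R) a j y :
  Sword p lam a j y = SW p lam (map a (iota 0 j)) y.
Proof. by rewrite /Sword /SW foldr_map. Qed.

Lemma foldl_map' (T1 T2 Rt : Type) (h : T1 -> T2) (f : Rt -> T2 -> Rt) z s :
  foldl f z (map h s) = foldl (fun z x => f z (h x)) z s.
Proof. by elim: s z => //= x s IH z; rewrite IH. Qed.

Lemma Tword_TW (R : realType) (d n : nat) (p : 'I_n.+1 -> 'rV[R]_d) (lam : R) a j y :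
  Tword p lam a j y = TW p lam (map a (iota 0 j)) y.
Proof. by rewrite /Tword /TW foldl_map'. Qed.

Lemma SW_cat (R : realType) (d n : nat) (p : 'I_n.+1 -> 'rV[R]_d) (lam : R) s t y :
  SW p lam (s ++ t) y = SW p lam s (SW p lam t y).
Proof. by rewrite /SW foldr_cat. Qed.

Lemma TW_cat (R : realType) (d n : nat) (p : 'I_n.+1 -> 'rV[R]_d) (lam : R) s t y :
  TW p lam (s ++ t) y = TW p lam t (TW p lam s y).
Proof. by rewrite /TW foldl_cat. Qed.

Lemma SW_X (R : realType) (d n : nat) (p : 'I_n.+1 -> 'rV[R]_d) (lam : R) X s y :
  is_attractor p lam X -> X y -> X (SW p lam s y).
Proof.
move=> [_ [_ HX]] Xy; elim: s => //= i s IH.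
rewrite /SW /= -/(SW p lam s y) HX; exists i => //; by exists (SW p lam s y).
Qed.

Lemma X_decomp (R : realType) (d n : nat) (p : 'I_n.+1 -> 'rV[R]_d) (lam : R) X k z :
  is_attractor p lam X -> X z -> exists w, size w = k /\ exists2 zk, X zk & z = SW p lam w zk.
Proof.
move=> HA; elim: k z => [|k IH] z Xz; first by exists [::]; split => //; exists z.
move: Xz; case: (HA) => [_ [_ HX]]; rewrite {1}HX => -[i _ [z1 Xz1 <-]].
have [w [sw [zk Xzk ->]]] := IH z1 Xz1.
exists (i :: w); split; first by rewrite /= sw.
by exists zk.
Qed.
Lemma approx_closure (R : realType) d (A : set 'rV[R]_d) z :
  (forall e : R, 0 < e -> exists y, A y /\ `|z - y| < e) -> closure A z.
Proof.
move=> H B /nbhs_ballP [e /= e0 Hb]; have [y [Ay dy]] := H e e0.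
exists y; split => //; apply: Hb; rewrite -ball_normE /ball_ /=. exact: dy.
Qed.

Lemma part1 (R : realType) (d n : nat) (p : 'I_n.+1 -> 'rV[R]_d)
  (lam : R) (X : set 'rV[R]_d) (a : nat -> 'I_n.+1) (x : 'rV[R]_d) :
  0 < lam < 1 -> is_attractor p lam X -> is_coding p lam a x ->
  forall j, X (Tword p lam a j x).
Proof.
move=> /andP[l0 l1] HA Hc j.
have l0' : lam != 0 by rewrite gt_eqF.
have cX : closed X := compact_closed (@norm_hausdorff _ _) HA.2.1.
apply: cX.
apply: approx_closure => e e0.
case: HA.1 => y0 Xy0.
set s := map a (iota 0 j).
have L0 : 0 < lam ^+ j := exprn_gt0 j l0.
have /cvgrPdist_lt /(_ (e * lam ^+ j / 2)) := Hc.
case; first by rewrite divr_gt0 // mulr_gt0.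
move=> N1 _ HN1.
have nl : `|lam| < 1 by rewrite ger0_norm // ltW.
have /cvgrPdist_lt /(_ (e / 2 / (`|y0| + 1))) := cvg_expr nl.
case; first by rewrite !divr_gt0 // ltr_pwDr.
move=> N2 _ HN2.
set k := (N1 + N2)%N.
set t := map a (iota j k).
exists (SW p lam t y0); split; first exact: SW_X.
have Hk1 : `|x - Sword p lam a (j + k) 0| < e * lam ^+ j / 2.
  by apply: HN1; rewrite /= /k addnCA leq_addr.
have Hk2 : `|0 - lam ^+ k| < e / 2 / (`|y0| + 1).
  by apply: HN2; rewrite /= /k leq_addl.
rewrite sub0r normrN ger0_norm ?exprn_ge0 ?ltW // in Hk2.
rewrite ltr_pdivlMr ?ltr_pwDr // in Hk2.
have ES : Sword p lam a (j + k) y0 = SW p lam s (SW p lam t y0).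
  by rewrite Sword_SW iotaD map_cat SW_cat.
have E1 : x - Sword p lam a (j + k) y0 =
    lam ^+ j *: (Tword p lam a j x - SW p lam t y0).
  by rewrite ES Tword_TW -{1}(SW_TW p s x l0') SW_diff size_map size_iota.
have E2 : Sword p lam a (j + k) 0 - Sword p lam a (j + k) y0 =
    lam ^+ (j + k) *: (0 - y0).
  by rewrite !Sword_SW SW_diff size_map size_iota.
have B1 : `|x - Sword p lam a (j + k) y0| <=
    `|x - Sword p lam a (j + k) 0| + lam ^+ j * (lam ^+ k * `|y0|).
  have -> : x - Sword p lam a (j + k) y0 =
    (x - Sword p lam a (j + k) 0) + (Sword p lam a (j + k) 0 - Sword p lam a (j + k) y0).
    by rewrite addrA subrK.
  rewrite E2 (le_trans (ler_normD _ _)) // lerD2l normrZ sub0r normrN.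
  rewrite ger0_norm; last by rewrite exprn_ge0 // ltW.
  by rewrite exprD mulrA lexx.
rewrite E1 normrZ (ger0_norm (ltW L0)) in B1.
set D := `|_ - _| in B1 *.
set A := `|_ - _| in B1 Hk1.
have D0 : 0 <= D by exact: normr_ge0.
have K0 : 0 <= lam ^+ k by rewrite exprn_ge0 ?ltW.
have B0 : 0 <= `|y0| by exact: normr_ge0.
have h1 : lam ^+ k * `|y0| <= e / 2.
  apply: le_trans (ltW Hk2); apply: ler_wpM2l => //; by rewrite lerDl.
have h2 : lam ^+ j * (lam ^+ k * `|y0|) <= lam ^+ j * (e / 2).
  by rewrite ler_pM2l.
have : lam ^+ j * D < lam ^+ j * e by lra.
by rewrite ltr_pM2l.
Qed.

Lemma Xbound (R : realType) (d n : nat) (p : 'I_n.+1 -> 'rV[R]_d)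
  (lam : R) (X : set 'rV[R]_d) :
  is_attractor p lam X -> exists2 M : R, 0 < M & forall y, X y -> `|y| <= M.
Proof.
move=> HA; have := compact_bounded HA.2.1.
move=> [M [_ HM]].
exists (`|M| + 1); first by rewrite ltr_pwDr.
move=> y Xy.
have := HM (`|M| + 1) _ y Xy. apply.
by rewrite (le_lt_trans (ler_norm M)) // ltrDl.
Qed.

Unset Implicit Arguments.
Theorem lemma5p1 (R : realType) (d n : nat) (p : 'I_n.+1 -> 'rV[R]_d)
  (lam : R) (X : set 'rV[R]_d) (a : nat -> 'I_n.+1) (x : 'rV[R]_d) :
  not_in_hyperplane p ->
  0 < lam < 1 ->
  is_attractor p lam X ->
  x \in X ->
  is_coding p lam a x ->
  universal a ->
  [set Tword p lam a j x | j in [set j : nat | (1 <= j)%N]] `<=` X /\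
  X `<=` closure [set Tword p lam a j x | j in [set j : nat | (1 <= j)%N]].
Proof.
move=> _ hl HA _ Hc Hu; split.
  by move=> y [j _ <-]; exact: part1.
move=> z Xz; apply: approx_closure => e e0.
case/andP: (hl) => l0 l1.
have l0' : lam != 0 by rewrite gt_eqF.
have [M M0 HM] := Xbound HA.
have nl : `|lam| < 1 by rewrite ger0_norm // ltW.
have /cvgrPdist_lt /(_ (e / (2 * M))) := cvg_expr nl.
case; first by rewrite divr_gt0 // mulr_gt0.
move=> N _ HN.
have Hk : `|0 - lam ^+ N| < e / (2 * M) by apply: HN; rewrite /=.
have K0 : 0 <= lam ^+ N by rewrite exprn_ge0 // ltW.
rewrite sub0r normrN (ger0_norm K0) ltr_pdivlMr ?mulr_gt0 // in Hk.
have [w [sw [zk Xzk ->]]] := X_decomp N HA Xz.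
have [m Hm] := Hu (ord0 :: w).
have Ew : map a (iota m.+1 N) = w.
  apply: (@eq_from_nth _ ord0); first by rewrite size_map size_iota sw.
  move=> i; rewrite size_map size_iota => iN.
  rewrite (nth_map 0%N) ?size_iota // nth_iota //.
  have := Hm i.+1; rewrite /= ltnS sw iN => /(_ isT).
  by rewrite addSnnS.
exists (Tword p lam a m.+1 x); split; first by exists m.+1.
have Ey : Tword p lam a m.+1 x = SW p lam w (Tword p lam a (m.+1 + N) x).
  by rewrite (Tword_TW p lam a (m.+1 + N)) iotaD map_cat TW_cat add0n Ew SW_TW // Tword_TW.
rewrite Ey SW_diff normrZ sw (ger0_norm K0).
have X1 := HM _ Xzk.
have X2 := HM _ (part1 hl HA Hc (m.+1 + N)).
have : `|zk - Tword p lam a (m.+1 + N) x| <= 2 * M.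
  by rewrite (le_trans (ler_normB _ _)) // mulr2n mulrDl mul1r lerD.
set D := `|_ - _|.
nra.
Qed.
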